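(* Suppose $H$ is a degenerate hypergraph. Then every subgraph of $H$ is degenerate, and every blowup $H(s_1,\dots,s_m)$ of $H$ is degenerate. Moreover, any subgraph of a blowup of a flag is degenerate.
   Context: A hypergraph $H=(V,E)$ has finite vertex set $V$ and edge set $E\subseteq 2^V$; $R(H)=\{|F|:F\in E\}$. $H_1\subseteq H_2$ (subgraph) means there is an injective $f\colon V(H_1)\to V(H_2)$ with $f(F)\in E(H_2)$ for all $F\in E(H_1)$. For $G$ on $n$ vertices, $h_n(G)=\sum_{F\in E(G)}1/\binom{n}{|F|}$; $\pi_n(H)=\max\{h_n(G): G\text{ on } n \text{ vertices}, R(G)\subseteq R(H), H\not\subseteq G\}$ and $\pi(H)=\lim_n\pi_n(H)$. $H$ is degenerate if $\pi(H)=|R(H)|-1$. For $H$ on vertex set $\{1,\dots,m\}$ and positive integers $s_i$, the blowup $H(s_1,\dots,s_m)$ has vertex set $V_1\sqcup\dots\sqcup V_m$, $|V_i|=s_i$, and edge set $\bigcup_{F\in E(H)}\prod_{i\in F}V_i$. A flag is a hypergraph having exactly one edge of each size in its set of edge types. *)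

(* Defs.v *)
From HB Require Import structures.
From mathcomp Require Import all_boot all_order all_algebra.
From mathcomp Require Import all_classical all_reals all_analysis.
Set Implicit Arguments. Unset Strict Implicit. Unset Printing Implicit Defensive.
Import Order.TTheory GRing.Theory Num.Theory.
Import numFieldNormedType.Exports.
Local Open Scope ring_scope.

(* A hypergraph on the finite vertex type V is its edge set E ⊆ 2^V,
   i.e. an element of {set {set V}}. *)

Definition edge_types (V : finType) (H : {set {set V}}) : seq nat :=
  undup [seq #|F| | F : {set V} in H].

Definition subgraph (V1 V2 : finType) (H1 : {set {set V1}}) (H2 : {set {set V2}})
  : bool :=
  [exists f : {ffun V1 -> V2}, injectiveb f && [forall F in H1, (f @: F) \in H2]].

Definition hdens (R : realType) (n : nat) (G : {set {set 'I_n}}) : R :=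
  \sum_(F in G) ('C(n, #|F|))%:R^-1.

(* pi_n(H): maximum of h_n(G) over G on n vertices with R(G) ⊆ R(H)
   and H not a subgraph of G (values are >= 0, so 0 is a neutral start). *)
Definition pi_n (R : realType) (V : finType) (H : {set {set V}}) (n : nat) : R :=
  \big[Num.max/0]_(G : {set {set 'I_n}} |
        all (fun k => k \in edge_types H) (edge_types G) && ~~ subgraph H G)
     hdens R G.

Local Open Scope classical_set_scope.
Definition degenerate (R : realType) (V : finType) (H : {set {set V}}) : Prop :=
  pi_n R H @ \oo --> ((size (edge_types H))%:R - 1 : R).

Local Close Scope classical_set_scope.

(* Blowup H(s): vertex set {i : V & 'I_(s i)} = disjoint union of the V_i;
   edges are {(i, g i) : i in F} for F in E(H) and g a choice of one vertex
   in each part, i.e. the union over F of prod_{i in F} V_i. *)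
Definition blowup (V : finType) (H : {set {set V}}) (s : V -> nat)
  : {set {set {i : V & 'I_(s i)}}} :=
  [set S : {set {i : V & 'I_(s i)}} |
     [exists F in H, exists g : {dffun forall i : V, 'I_(s i)},
        S == [set Tagged (fun i => 'I_(s i)) (g i) | i in F]]].

Definition is_flag (V : finType) (H : {set {set V}}) : Prop :=
  forall F1 F2, F1 \in H -> F2 \in H -> #|F1| = #|F2| -> F1 = F2.

(* Main.v *)
Require Import Defs.
From HB Require Import structures.
From mathcomp Require Import all_boot all_order all_algebra all_fingroup.
From mathcomp Require Import all_classical all_reals all_analysis.
From mathcomp Require Import lra zify ring.
Import Order.TTheory GRing.Theory Num.Theory.
Set Implicit Arguments. Unset Strict Implicit. Unset Printing Implicit Defensive.
Local Open Scope ring_scope.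


Section A.
Variable R : realType.

Lemma sum_seq_const (T : Type) (s : seq T) (P : pred T) (x : R) :
  \sum_(k <- s | P k) x = x *+ count P s.
Proof. by rewrite big_const_seq; elim: (count P s) => //= n ->; rewrite mulrS. Qed.

Lemma sum_partition (T : finType) (A : pred T) (h : T -> nat) (s : seq nat)
   (F : T -> R) : uniq s -> (forall i, A i -> h i \in s) ->
  \sum_(i in A) F i = \sum_(k <- s) \sum_(i in A | h i == k) F i.
Proof.
move=> us hs.
under [RHS]eq_bigr => k _ do rewrite big_mkcondr.
rewrite exchange_big /=.
apply: eq_bigr => i Ai.
rewrite -big_mkcond /=.
rewrite (eq_bigl (fun k => k == h i)); last by move=> k; rewrite eq_sym.
rewrite sum_seq_const.
by rewrite (count_uniq_mem _ us) hs.
Qed.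

Lemma mem_et (V : finType) (H : {set {set V}}) k :
  (k \in edge_types H) = [exists F in H, #|F| == k].
Proof.
rewrite /edge_types mem_undup.
apply/idP/existsP.
  by move/mapP => [F]; rewrite mem_enum => FH ->; exists F; rewrite FH eqxx.
by case=> F /andP[FH /eqP <-]; apply/mapP; exists F; rewrite ?mem_enum.
Qed.

Lemma et_uniq (V : finType) (H : {set {set V}}) : uniq (edge_types H).
Proof. exact: undup_uniq. Qed.

Lemma et_memP (V : finType) (H : {set {set V}}) F : F \in H -> #|F| \in edge_types H.
Proof. by move=> FH; rewrite mem_et; apply/existsP; exists F; rewrite FH eqxx. Qed.

Lemma hdens_ge0 n (G : {set {set 'I_n}}) : 0 <= hdens R G.
Proof. by apply: sumr_ge0 => F _; rewrite invr_ge0 ler0n. Qed.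

Lemma layer_le1 n (G : {set {set 'I_n}}) k :
  \sum_(F in G | #|F| == k) ('C(n, #|F|))%:R^-1 <= 1 :> R.
Proof.
rewrite (eq_bigr (fun _ => ('C(n, k))%:R^-1)); last by move=> F /andP[_ /eqP ->].
rewrite sumr_const -(mulr_natr (('C(n,k))%:R^-1)).
have hc : (#|[pred F in G | #|F| == k]| <= 'C(n, k))%N.
  rewrite -[n in 'C(n, _)]card_ord -card_draws.
  apply: subset_leq_card; apply/fintype.subsetP => F /=.
  by rewrite !inE => /andP[_ ->].
have [c0|cpos] := eqVneq ('C(n, k)) 0%N.
  by rewrite c0 invr0 mul0r.
rewrite mulrC ler_pdivrMr ?ltr0n ?lt0n // mul1r ler_nat //.
Qed.

Lemma hdens_le_et n (G : {set {set 'I_n}}) :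
  hdens R G <= (size (edge_types G))%:R.
Proof.
rewrite /hdens (@sum_partition _ _ (fun F : {set 'I_n} => #|F|) (edge_types G));
  [| exact: et_uniq | by move=> F FG; apply: et_memP].
rewrite -(sum1_size (edge_types G)) natr_sum.
by apply: ler_sum => k _; apply: layer_le1.
Qed.


Definition Lay n (s : seq nat) : {set {set 'I_n}} := [set F : {set 'I_n} | #|F| \in s].

Lemma hdens_Lay n (s : seq nat) : uniq s -> all (fun k => k <= n)%N s ->
  hdens R (Lay n s) = (size s)%:R.
Proof.
move=> us hs.
rewrite /hdens (@sum_partition _ _ (fun F : {set 'I_n} => #|F|) s) //; last first.
  by move=> F hF; have : F \in Lay n s := hF; rewrite inE.
rewrite -(sum1_size s) natr_sum big_seq [RHS]big_seq.
apply: eq_bigr => k ks.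
rewrite (eq_bigr (fun _ => ('C(n, k))%:R^-1)); last by move=> F /andP[_ /eqP ->].
rewrite sumr_const -(mulr_natr (('C(n,k))%:R^-1)).
have -> : #|[pred F in Lay n s | #|F| == k]| = 'C(n, k).
  rewrite -[n in 'C(n, _)]card_ord -card_draws.
  apply: eq_card => F; rewrite !inE.
  by case: eqP => [->|]; rewrite ?ks ?andbF.
have kn : (k <= n)%N by move/allP: hs => /(_ k ks).
by rewrite mulVf // pnatr_eq0 -lt0n bin_gt0.
Qed.

Lemma et_sub (V : finType) (G : {set {set V}}) (P : pred nat) :
  (forall F, F \in G -> P #|F|) -> forall k, k \in edge_types G -> P k.
Proof. by move=> h k; rewrite mem_et => /existsP[F /andP[FG /eqP <-]]; apply: h. Qed.

Lemma et_le (V : finType) (G : {set {set V}}) k : k \in edge_types G -> (k <= #|V|)%N.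
Proof. by apply: (@et_sub V G (fun k => k <= #|V|)%N) => F _; apply: max_card. Qed.

Lemma subgraphP (V1 V2 : finType) (H1 : {set {set V1}}) (H2 : {set {set V2}}) :
  reflect (exists f : {ffun V1 -> V2}, injective f /\ forall F, F \in H1 -> f @: F \in H2)
          (subgraph H1 H2).
Proof.
apply: (iffP existsP) => [[f /andP[/injectiveP fi /forallP hf]]|[f [fi hf]]].
  by exists f; split => // F FH; move: (hf F); rewrite FH.
exists f; apply/andP; split; first by apply/injectiveP.
by apply/forallP => F; apply/implyP; apply: hf.
Qed.

Lemma subgraph_trans (V1 V2 V3 : finType) (H1 : {set {set V1}}) (H2 : {set {set V2}})
  (H3 : {set {set V3}}) : subgraph H1 H2 -> subgraph H2 H3 -> subgraph H1 H3.
Proof.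
move=> /subgraphP[f [fi hf]] /subgraphP[g [gi hg]]; apply/subgraphP.
exists [ffun x => g (f x)]; split.
  by move=> x y; rewrite !ffunE => /gi /fi.
move=> F FH; have -> : [ffun x => g (f x)] @: F = g @: (f @: F).
  by rewrite -imset_comp; apply: eq_imset => x; rewrite ffunE.
by apply: hg; apply: hf.
Qed.

Lemma et_subgraph (V1 V2 : finType) (H1 : {set {set V1}}) (H2 : {set {set V2}}) :
  subgraph H1 H2 -> forall k, k \in edge_types H1 -> k \in edge_types H2.
Proof.
move=> /subgraphP[f [fi hf]]; apply: et_sub => F FH.
by rewrite -(card_imset F fi); apply: et_memP; apply: hf.
Qed.

Definition admissible (V : finType) (H : {set {set V}}) n (G : {set {set 'I_n}}) :=
  all (fun k => k \in edge_types H) (edge_types G) && ~~ subgraph H G.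

Lemma pi_n_ge0 (V : finType) (H : {set {set V}}) n : 0 <= pi_n R H n.
Proof.
rewrite /pi_n; elim/big_ind: _ => //.
  by move=> x y hx hy; rewrite le_max hx.
by move=> G _; apply: hdens_ge0.
Qed.

Lemma pi_n_ge (V : finType) (H : {set {set V}}) n (G : {set {set 'I_n}}) :
  all (fun k => k \in edge_types H) (edge_types G) -> ~~ subgraph H G ->
  hdens R G <= pi_n R H n.
Proof. by move=> h1 h2; rewrite /pi_n; apply: le_bigmax_cond; rewrite h1 h2. Qed.

Lemma pi_n_le (V : finType) (H : {set {set V}}) n (M : R) : 0 <= M ->
  (forall G : {set {set 'I_n}}, (forall k, k \in edge_types G -> k \in edge_types H) ->
     ~~ subgraph H G -> hdens R G <= M) -> pi_n R H n <= M.
Proof.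
move=> M0 h; rewrite /pi_n; apply: bigmax_le => // G /andP[/allP h1 h2].
exact: h.
Qed.

Lemma uniq_count_mem (a b : seq nat) : uniq a -> uniq b -> {subset a <= b} ->
  count (mem a) b = size a.
Proof.
move=> ua ub sab; rewrite -size_filter; apply: perm_size.
apply: uniq_perm; first by apply: filter_uniq.
  by [].
move=> x; rewrite mem_filter; apply/andP/idP => [[]//|xa]; split => //; exact: sab.
Qed.

Lemma pi_n_LB (V : finType) (H : {set {set V}}) n : (0 < #|H|)%N -> (#|V| <= n)%N ->
  (size (edge_types H))%:R - 1 <= pi_n R H n.
Proof.
rewrite card_gt0 => /set0Pn[F0 F0H] Vn.
set s := [seq k <- edge_types H | k != #|F0|].
have us : uniq s by rewrite filter_uniq ?et_uniq.
have hs : all (fun k => k <= n)%N s.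
  apply/allP => k; rewrite mem_filter => /andP[_ /et_le kV]; exact: leq_trans kV Vn.
have sz : size s = (size (edge_types H)).-1.
  rewrite size_filter; have := count_predC (pred1 #|F0|) (edge_types H).
  rewrite (count_uniq_mem _ (et_uniq H)) (et_memP F0H).
  by move=> <-; rewrite add1n.
have r1 : (0 < size (edge_types H))%N.
  by case: (edge_types H) (et_memP F0H).
have -> : (size (edge_types H))%:R - 1 = (size s)%:R :> R.
  by rewrite sz -[in LHS](prednK r1) mulrS addrC addrK.
rewrite -(@hdens_Lay n) //; apply: pi_n_ge.
  apply/allP; apply: et_sub => F; rewrite inE mem_filter; by case/andP.
apply/negP => /subgraphP[f [fi hf]].
have := hf F0 F0H; rewrite inE mem_filter (card_imset _ fi) /=.
by rewrite eqxx.
Qed.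


Definition lim_of (V : finType) (H : {set {set V}}) : R := (size (edge_types H))%:R - 1.

Lemma degenP (V : finType) (H : {set {set V}}) :
  degenerate R H <-> (forall e : R, 0 < e -> exists N, forall n, (N <= n)%N ->
     `|lim_of H - pi_n R H n| <= e).
Proof.
rewrite /degenerate /lim_of cvgrPdist_le.
split => h e he.
  have := h e he. move=> [N _ hN]. exists N => n hn. exact: hN.
have [N hN] := h e he. exists N => //.
Qed.

Lemma degen_upper (V : finType) (H : {set {set V}}) : degenerate R H ->
  forall e : R, 0 < e -> exists N, forall n, (N <= n)%N -> pi_n R H n <= lim_of H + e.
Proof.
move/degenP => h e he; have [N hN] := h e he; exists N => n /hN.
by rewrite ler_distlC => /andP[].
Qed.

Lemma degen_of (V : finType) (H : {set {set V}}) : (0 < #|H|)%N ->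
  (forall e : R, 0 < e -> exists N, forall n, (N <= n)%N -> pi_n R H n <= lim_of H + e) ->
  degenerate R H.
Proof.
move=> H0 h; apply/degenP => e he; have [N hN] := h e he.
exists (maxn N #|V|) => n; rewrite geq_max => /andP[Nn Vn].
rewrite ler_distlC hN // andbT.
have := pi_n_LB H0 Vn; rewrite /lim_of => hl.
by apply: le_trans hl; rewrite lerBlDr lerDl ltW.
Qed.

Lemma degen_nonempty (V : finType) (H : {set {set V}}) : degenerate R H -> (0 < #|H|)%N.
Proof.
move=> dH; rewrite lt0n; apply/negP => /eqP /eqP; rewrite cards_eq0 => /eqP H0.
have [] := degen_upper dH (e := 1/2); first by rewrite divr_gt0.
move=> N /(_ N (leqnn N)); rewrite /lim_of.
have -> : edge_types H = [::].
  case E: (edge_types H) => [//|k s].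
  have : k \in edge_types H by rewrite E mem_head.
  by rewrite mem_et H0 => /existsP[F]; rewrite inE.
have := pi_n_ge0 H N.
rewrite /=.
move=> h1 h2; clear H0 dH; lra.
Qed.

Lemma lim_of_ge (V : finType) (H : {set {set V}}) : (0 < #|H|)%N -> 0 <= lim_of H.
Proof.
rewrite card_gt0 => /set0Pn[F0 F0H].
have r1 : (0 < size (edge_types H))%N by case: (edge_types H) (et_memP F0H).
by rewrite /lim_of subr_ge0 ler1n.
Qed.

Lemma sub_degen (V W : finType) (H : {set {set V}}) (H' : {set {set W}}) :
  degenerate R H -> (0 < #|H'|)%N -> subgraph H' H -> degenerate R H'.
Proof.
move=> dH H'0 sub.
have ets := et_subgraph sub.
apply: degen_of => // e he.
have [N hN] := degen_upper dH he.
exists (maxn N #|V|) => n; rewrite geq_max => /andP[Nn Vn].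
apply: pi_n_le; first by rewrite addr_ge0 ?lim_of_ge ?ltW.
move=> G etG nsub.
set s := [seq k <- edge_types H | k \notin edge_types H'].
have us : uniq s by rewrite filter_uniq ?et_uniq.
have hs : all (fun k => k <= n)%N s.
  apply/allP => k; rewrite mem_filter => /andP[_ /et_le kV]; exact: leq_trans kV Vn.
have sz : (size s + size (edge_types H'))%N = size (edge_types H).
  rewrite size_filter -(uniq_count_mem (et_uniq H') (et_uniq H) ets).
  by rewrite addnC; apply: count_predC.
have disj : [disjoint G & Lay n s].
  apply/pred0P => F /=; apply/negP => /andP[FG]; rewrite inE mem_filter.
  by rewrite (etG _ (et_memP FG)).
have hU : hdens R (G :|: Lay n s) = hdens R G + (size s)%:R.
  rewrite /hdens (eq_bigl [predU G & Lay n s]); last by move=> F; rewrite !inE.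
  by rewrite bigU // -/(hdens R (Lay n s)) hdens_Lay.
have : hdens R (G :|: Lay n s) <= lim_of H + e.
  apply: le_trans (hN n Nn); apply: pi_n_ge.
    apply/allP; apply: et_sub => F; rewrite !inE => /orP[FG|].
      by apply: ets; apply: etG; apply: et_memP.
    by rewrite mem_filter => /andP[].
  apply: contra nsub => sG.
  have /subgraphP[g [gi hg]] := subgraph_trans sub sG.
  apply/subgraphP; exists g; split => // F FH.
  have := hg F FH; rewrite !inE => /orP[//|].
  by rewrite mem_filter (card_imset _ gi) (et_memP FH).
rewrite hU /lim_of -sz natrD.
move=> h; lra.
Qed.

End A.


Lemma mem_tperm_imset (T : finType) (x y z : T) (A : {set T}) :
  (z \in tperm x y @: A) = (tperm x y z \in A).
Proof.
apply/imsetP/idP => [[a aA ->]|h]; first by rewrite tpermK.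
by exists (tperm x y z); rewrite ?tpermK.
Qed.

Lemma perm_sets (T : finType) (A B : {set T}) : #|A| = #|B| ->
  exists s : {perm T}, s @: A = B.
Proof.
move: {2}#|A :\: B| (erefl #|A :\: B|) => k; elim: k A => [|k IH] A hk hAB.
  exists 1%g.
  have sAB : A \subset B by rewrite -finset.setD_eq0 -cards_eq0 hk.
  have -> : A = B by apply/eqP; rewrite eqEcard sAB hAB leqnn.
  by rewrite -[RHS]imset_id; apply: eq_imset => z; rewrite perm1.
have : (0 < #|A :\: B|)%N by rewrite hk.
rewrite card_gt0 => /set0Pn[x]; rewrite inE => /andP[xB xA].
have hBA : #|B :\: A| = #|A :\: B|.
  have h1 := cardsID B A; have h2 := cardsID A B.
  rewrite finset.setIC in h2; lia.
have : (0 < #|B :\: A|)%N by rewrite hBA hk.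
rewrite card_gt0 => /set0Pn[y]; rewrite inE => /andP[yA yB].
set t := tperm x y.
have hA1 : #|t @: A| = #|B| by rewrite card_imset //; apply: perm_inj.
have hD : (t @: A) :\: B = (A :\: B) :\ x.
  apply/setP => z; rewrite !inE mem_tperm_imset.
  have [->|zx] := eqVneq z x; first by rewrite tpermL (negbTE yA) andbF.
  have [->|zy] := eqVneq z y; first by rewrite yB.
  by rewrite tpermD // eq_sym.
have hk1 : #|(t @: A) :\: B| = k.
  rewrite hD; have := cardsD1 x (A :\: B); rewrite inE xA xB hk /=.
  by move=> [].
have [s hs] := IH _ hk1 hA1.
exists (t * s)%g.
rewrite -hs -imset_comp; apply: eq_imset => z /=.
by rewrite permM.
Qed.

Definition InjS (D : finType) n := [set f : {ffun D -> 'I_n} | injectiveb f].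

Definition Nset (D : finType) n (F : {set D}) (A : {set 'I_n}) :=
  [set f : {ffun D -> 'I_n} | injectiveb f && (f @: F == A)].

Lemma Nset_perm (D : finType) n (F : {set D}) (A : {set 'I_n}) (s : {perm 'I_n}) :
  (#|Nset F A| <= #|Nset F (s @: A)|)%N.
Proof.
rewrite -(card_imset (Nset F A) (f := fun f : {ffun D -> 'I_n} => [ffun x => s (f x)])).
  apply: subset_leq_card; apply/fintype.subsetP => g /imsetP[f].
  rewrite !inE => /andP[/injectiveP fi /eqP fA] ->; apply/andP; split.
    by apply/injectiveP => x y; rewrite !ffunE => /perm_inj /fi.
  rewrite -fA -imset_comp; apply/eqP; apply: eq_imset => x /=; by rewrite ffunE.
move=> f g /ffunP h; apply/ffunP => x; have := h x; rewrite !ffunE.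
exact: perm_inj.
Qed.

Lemma Nset_eq (D : finType) n (F : {set D}) (A B : {set 'I_n}) :
  #|A| = #|B| -> #|Nset F A| = #|Nset F B|.
Proof.
move=> /perm_sets[s <-]; apply/eqP; rewrite eqn_leq Nset_perm /=.
have {2}-> : A = (s^-1)%g @: (s @: A).
  rewrite -imset_comp -[LHS]imset_id; apply: eq_imset => z /=.
  by rewrite permK.
exact: Nset_perm.
Qed.

Lemma Nset_total (D : finType) n (F : {set D}) :
  (\sum_(A : {set 'I_n} | #|A| == #|F|) #|Nset F A|)%N = #|InjS D n|.
Proof.
rewrite [RHS]cardE -sum1_size big_enum /=.
rewrite (partition_big (fun f : {ffun D -> 'I_n} => f @: F) (fun A => #|A| == #|F|)) /=.
  apply: eq_bigr => A _; rewrite cardE -sum1_size big_enum /=.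
  by apply: eq_bigl => f; rewrite !inE.
by move=> f; rewrite inE => /injectiveP fi; rewrite card_imset.
Qed.

Lemma Nset_val (D : finType) n (F : {set D}) (A : {set 'I_n}) : #|A| = #|F| ->
  (#|Nset F A| * 'C(n, #|F|))%N = #|InjS D n|.
Proof.
move=> hA; rewrite -(@Nset_total D n F).
rewrite (eq_bigr (fun _ => #|Nset F A|)); last by move=> B /eqP hB; apply: Nset_eq; rewrite hA hB.
rewrite sum_nat_const.
have -> : #|[pred B : {set 'I_n} | #|B| == #|F|]| = 'C(n, #|F|).
  by rewrite -[n in 'C(n, _)]card_ord -card_draws; apply: eq_card => B; rewrite !inE.
by rewrite mulnC.
Qed.

Lemma Nset_card_neq (D : finType) n (F : {set D}) (A : {set 'I_n}) : #|A| != #|F| ->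
  #|Nset F A| = 0%N.
Proof.
move=> hA; apply/eqP; rewrite cards_eq0; apply/eqP/setP => f; rewrite !inE.
apply/negP => /andP[/injectiveP fi /eqP fA]; move: hA; by rewrite -fA card_imset ?eqxx.
Qed.

Section Cnt.
Variable R : realType.

Lemma count_images (D : finType) n (F : {set D}) (G : {set {set 'I_n}}) :
  \sum_(f in InjS D n) ((f @: F) \in G)%:R =
  (#|InjS D n|)%:R * \sum_(A in G | #|A| == #|F|) ('C(n, #|A|))%:R^-1 :> R.
Proof.
have step : forall f : {ffun D -> 'I_n}, ((f @: F) \in G)%:R = \sum_(A in G) (f @: F == A)%:R :> R.
  move=> f; case fG: (f @: F \in G).
    rewrite (bigD1 (f @: F)) //= eqxx big1 ?addr0 // => A /andP[_ hA].
    by rewrite eq_sym (negbTE hA).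
  rewrite big1 // => A AG; case: eqP => // hA; by move: fG; rewrite hA AG.
rewrite (eq_bigr _ (fun f _ => step f)) exchange_big /=.
rewrite mulr_sumr [RHS]big_mkcondr /=.
apply: eq_bigr => A AG.
have -> : \sum_(f in InjS D n) (f @: F == A)%:R = (#|Nset F A|)%:R :> R.
  rewrite -natr_sum; congr _%:R.
  rewrite -sum1_card big_mkcond /= [RHS]big_mkcond /=; apply: eq_bigr => f _.
  by rewrite !inE; case: (injectiveb f); case: eqP.
case: eqP => hA; last by rewrite Nset_card_neq //; apply/eqP.
have hC : ('C(n, #|A|) != 0)%N by rewrite -lt0n bin_gt0 -[X in (_ <= X)%N]card_ord max_card.
rewrite -(@Nset_val D n F A) // -hA natrM mulrK //.
by rewrite unitfE pnatr_eq0.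
Qed.

End Cnt.

Section Flag.
Variable R : realType.

Lemma inj_card_gt0 (D : finType) n : (#|D| <= n)%N -> (0 < #|InjS D n|)%N.
Proof. by move=> h; rewrite /InjS card_inj_ffuns card_ord ffact_gt0. Qed.

Lemma flag_size (V : finType) (H : {set {set V}}) : is_flag H ->
  size (edge_types H) = #|H|.
Proof.
move=> fl; rewrite /edge_types undup_id.
  by rewrite size_map -cardE.
rewrite map_inj_in_uniq ?enum_uniq //.
by move=> F1 F2; rewrite !mem_enum => h1 h2; apply: fl.
Qed.

Lemma flag_bound (V : finType) (H : {set {set V}}) n (G : {set {set 'I_n}}) :
  is_flag H -> (#|V| <= n)%N -> (forall k, k \in edge_types G -> k \in edge_types H) ->
  ~~ subgraph H G -> hdens R G <= (size (edge_types H))%:R - 1.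
Proof.
move=> fl Vn etG nsub.
set S := \sum_(f in InjS V n) \sum_(F in H) ((f @: F) \in G)%:R : R.
have S1 : S = (#|InjS V n|)%:R * hdens R G.
  rewrite /S exchange_big /=.
  rewrite (eq_bigr _ (fun F _ => count_images R F G)) -mulr_sumr; congr (_ * _).
  rewrite /hdens.
  under eq_bigr => F _ do rewrite big_mkcondr /=.
  rewrite exchange_big /=; apply: eq_bigr => A AG.
  rewrite -big_mkcondr /=.
  have := et_memP AG => /etG; rewrite mem_et => /existsP[F0 /andP[F0H /eqP hF0]].
  rewrite (bigD1 F0) /=; last by rewrite F0H hF0 eqxx.
  rewrite big1 ?addr0 // => F /andP[/andP[FH /eqP hF] FF0].
  have e : F = F0 by apply: fl => //; rewrite -hF hF0.
  by rewrite e eqxx in FF0.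
have S2 : S <= (#|InjS V n|)%:R * ((size (edge_types H))%:R - 1).
  rewrite /S -[X in X%:R * _]sum1_card natr_sum mulr_suml.
  apply: ler_sum => f; rewrite inE => /injectiveP fi.
  have : ~~ [forall F in H, f @: F \in G].
    apply: contra nsub => /forallP hall; apply/subgraphP; exists f; split => // F FH.
    by have := hall F; rewrite FH.
  rewrite negb_forall => /existsP[F0]; rewrite negb_imply => /andP[F0H F0G].
  rewrite (bigD1 F0) //= (negbTE F0G) add0r.
  apply: (@le_trans _ _ (\sum_(F in H | F != F0) 1)).
    by apply: ler_sum => F _; case: (_ \in G).
  rewrite sumr_const flag_size //.
  have := cardsD1 F0 H; rewrite F0H add1n => ->.
  rewrite mul1r mulrS addrC addrK ler_nat.
  apply: eq_leq; apply: eq_card => F; rewrite !inE; by rewrite andbC.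
have hI : (0 < #|InjS V n|)%N by apply: inj_card_gt0.
have := S2; rewrite S1.
by rewrite ler_pM2l // ltr0n.
Qed.

Lemma flag_degen (V : finType) (H : {set {set V}}) : is_flag H -> (0 < #|H|)%N ->
  degenerate R H.
Proof.
move=> fl H0; apply: degen_of => // e he; exists #|V| => n Vn.
apply: pi_n_le; first by rewrite addr_ge0 ?lim_of_ge ?ltW.
move=> G etG nsub; apply: le_trans (flag_bound fl Vn etG nsub) _.
by rewrite /lim_of lerDl ltW.
Qed.

End Flag.

Section Avg.
Variable R : realType.

Definition pull m n (psi : {ffun 'I_m -> 'I_n}) (G : {set {set 'I_n}}) : {set {set 'I_m}} :=
  [set F : {set 'I_m} | psi @: F \in G].

Lemma avg_pull m n (G : {set {set 'I_n}}) : (forall A, A \in G -> #|A| <= m)%N ->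
  \sum_(psi in InjS 'I_m n) hdens R (pull psi G) = (#|InjS 'I_m n|)%:R * hdens R G.
Proof.
move=> hG.
have e1 : forall psi : {ffun 'I_m -> 'I_n}, hdens R (pull psi G) =
    \sum_(F : {set 'I_m}) ((psi @: F) \in G)%:R * ('C(m, #|F|))%:R^-1.
  move=> psi; rewrite /hdens big_mkcond /=; apply: eq_bigr => F _.
  by rewrite inE; case: (_ \in G); rewrite ?mul1r ?mul0r.
rewrite (eq_bigr _ (fun psi _ => e1 psi)) exchange_big /=.
under eq_bigr => F _ do rewrite -mulr_suml count_images.
rewrite /hdens mulr_sumr.
under eq_bigr => F _ do rewrite -mulrA mulr_suml mulr_sumr big_mkcondr /=.
rewrite exchange_big /=; apply: eq_bigr => A AG.
rewrite -big_mkcondr /=.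
rewrite (eq_bigr (fun _ => (#|InjS 'I_m n|)%:R * (('C(n, #|A|))%:R^-1 * ('C(m, #|A|))%:R^-1))); last first.
  by move=> F /eqP ->.
rewrite sumr_const.
have -> : #|[pred F : {set 'I_m} | #|A| == #|F|]| = 'C(m, #|A|).
  rewrite -[m in 'C(m, _)]card_ord -card_draws; apply: eq_card => F; rewrite !inE.
  by rewrite eq_sym.
have hC : ('C(m, #|A|) != 0)%N by rewrite -lt0n bin_gt0 hG.
have hC' : ('C(m, #|A|))%:R != 0 :> R by rewrite pnatr_eq0.
rewrite -mulr_natr; field.
rewrite hC' andbT pnatr_eq0 -lt0n bin_gt0 -[X in (_ <= X)%N]card_ord; exact: max_card.
Qed.

End Avg.


Lemma ffact_lb (a t : nat) : ((a - t) ^ t <= a ^_ t)%N.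
Proof.
elim: t a => [|t IH] a; first by rewrite expn0 ffactn0.
rewrite ffactnS expnS.
have e : (a - t.+1 = a.-1 - t)%N by lia.
rewrite e; apply: leq_mul; first by lia.
exact: IH.
Qed.

Lemma ffact_ub (a t : nat) : (a ^_ t <= a ^ t)%N.
Proof.
elim: t a => [|t IH] a; first by rewrite expn0 ffactn0.
rewrite ffactnS expnS; apply: leq_mul => //.
apply: leq_trans (IH _) _; case: t {IH} => [|t]; first by rewrite !expn0.
by rewrite leq_exp2r //; lia.
Qed.

Section Box.
Variable R : realType.

Definition consx (X : finType) m (x : X) (w : m.-tuple X) : m.+1.-tuple X := [tuple of x :: w].

Lemma sum_tuple_cons (X : finType) m (P : {set (m.+1.-tuple X)}) :
  (#|P| = \sum_(w : m.-tuple X) #|[set x | consx x w \in P]|)%N.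
Proof.
rewrite -sum1_card.
rewrite (reindex (fun p : X * m.-tuple X => consx p.1 p.2)) /=; last first.
  exists (fun u : m.+1.-tuple X => (thead u, [tuple of behead u])).
    by move=> [x w] _ /=; congr (_, _); apply: val_inj.
  by move=> u _; rewrite /consx /= [RHS]tuple_eta.
rewrite big_mkcond /=.
rewrite -(pair_big xpredT xpredT (fun x w => if consx x w \in P then 1%N else 0%N)) /=.
rewrite exchange_big /=.
apply: eq_bigr => w _; rewrite -sum1_card [RHS]big_mkcond /=; apply: eq_bigr => x _; by rewrite inE.
Qed.


Lemma sum_ET (X : finType) m t (E : {set m.+1.-tuple X}) :
  (\sum_(T : {set X} | #|T| == t) #|[set w : m.-tuple X | T \subset [set x | consx x w \in E]]|
   = \sum_(w : m.-tuple X) 'C(#|[set x | consx x w \in E]|, t))%N.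
Proof.
under eq_bigr => T _ do rewrite -sum1_card big_mkcond /=.
rewrite exchange_big /=; apply: eq_bigr => w _.
rewrite -cards_draws -sum1_card [RHS]big_mkcond /= big_mkcond /=.
apply: eq_bigr => T _; rewrite !inE.
by case: (#|T| == t); case: (T \subset _); rewrite ?andbF ?andbT.
Qed.

Lemma binom_lb (a t : nat) (x : R) : 0 <= x -> x + t%:R <= a%:R ->
  x ^+ t / (t`!)%:R <= ('C(a, t))%:R.
Proof.
move=> x0 hx.
have ta : (t <= a)%N by rewrite -(ler_nat R); apply: le_trans hx; rewrite lerDr.
have hf : (0 < (t`!)%:R :> R) by rewrite ltr0n fact_gt0.
rewrite ler_pdivrMr // -natrM bin_ffact.
apply: (@le_trans _ _ (((a - t) ^ t)%N)%:R); last by rewrite ler_nat ffact_lb.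
rewrite natrX lerXn2r // ?nnegrE ?ler0n //.
by rewrite natrB // lerBrDr.
Qed.

Lemma binom_ub (n t : nat) : ('C(n, t))%:R <= (n%:R ^+ t) / (t`!)%:R :> R.
Proof.
have hf : (0 < (t`!)%:R :> R) by rewrite ltr0n fact_gt0.
rewrite ler_pdivlMr // -natrM bin_ffact -natrX ler_nat ffact_ub //.
Qed.

Lemma find_T (X : finType) m t (c : R) (E : {set m.+1.-tuple X}) : 0 < c ->
  (0 < #|X|)%N -> (t <= #|X|)%N -> 4 * t%:R <= c * #|X|%:R ->
  c * #|X|%:R ^+ m.+1 <= #|E|%:R ->
  exists T : {set X}, #|T| = t /\
    (c / 2 * (c / 4) ^+ t) * #|X|%:R ^+ m <=
    #|[set w : m.-tuple X | T \subset [set x | consx x w \in E]]|%:R.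
Proof.
move=> c0 X0 tX htc hE.
set n := #|X| in X0 tX htc hE *.
have n0 : 0 < n%:R :> R by rewrite ltr0n.
set Nb := fun w : m.-tuple X => [set x | consx x w \in E].
set Good := [set w : m.-tuple X | c * n%:R / 2 <= #|Nb w|%:R].
have hG : c / 2 * n%:R ^+ m <= #|Good|%:R.
  have e1 : #|E|%:R = \sum_(w : m.-tuple X) #|Nb w|%:R :> R.
    by rewrite (sum_tuple_cons E) natr_sum.
  rewrite e1 (bigID (fun w => w \in Good)) /= in hE.
  have b1 : \sum_(w | w \in Good) #|Nb w|%:R <= #|Good|%:R * n%:R :> R.
    rewrite -[X in X%:R * _]sum1_card natr_sum mulr_suml.
    by apply: ler_sum => w _; rewrite mul1r ler_nat max_card.
  have b2 : \sum_(w | w \notin Good) #|Nb w|%:R <= n%:R ^+ m * (c * n%:R / 2) :> R.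
    apply: (@le_trans _ _ (\sum_(w | w \notin Good) (c * n%:R / 2))).
      apply: ler_sum => w; rewrite inE => /negP h; apply/ltW; rewrite ltNge; exact/negP.
    rewrite sumr_const -(mulr_natl (c * n%:R / 2)); apply: ler_wpM2r.
      by rewrite divr_ge0 ?mulr_ge0 ?ltW.
    rewrite -natrX ler_nat -card_tuple; exact: max_card.
  have h3 : c * n%:R ^+ m.+1 <= #|Good|%:R * n%:R + n%:R ^+ m * (c * n%:R / 2).
    by apply: le_trans hE _; apply: lerD.
  rewrite -(ler_pM2r n0).
  rewrite exprS in h3.
  set a := n%:R ^+ m in h3 *; set g := #|Good|%:R in h3 *.
  set nn := n%:R in h3 n0 *.
  nra.
set x := c / 4 * n%:R.
have x0 : 0 <= x by rewrite mulr_ge0 ?divr_ge0 ?ltW.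
set K := x ^+ t / (t`!)%:R.
have K0 : 0 <= K by rewrite divr_ge0 ?exprn_ge0 ?ler0n.
set S := \sum_(T : {set X} | #|T| == t) #|[set w : m.-tuple X | T \subset Nb w]|%:R : R.
have hS : #|Good|%:R * K <= S.
  rewrite /S -natr_sum sum_ET natr_sum (bigID (fun w => w \in Good)) /=.
  apply: (@le_trans _ _ (\sum_(w in Good) 'C(#|Nb w|, t)%:R)); last first.
    by rewrite lerDl sumr_ge0 // => w _; rewrite ler0n.
  rewrite -[X in X%:R * _]sum1_card natr_sum mulr_suml.
  apply: ler_sum => w; rewrite inE => hw; rewrite mul1r; apply: binom_lb => //.
  rewrite /x; lra.
pose c1 := c / 2 * (c / 4) ^+ t.
case: (pickP (fun T : {set X} => (#|T| == t) &&
   (c1 * n%:R ^+ m <= #|[set w : m.-tuple X | T \subset Nb w]|%:R))) => [T /andP[/eqP hT hle]|none].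
  by exists T.
exfalso.
have hC : (0 < 'C(n, t))%N by rewrite bin_gt0.
have [T0 hT0] : exists T0 : {set X}, #|T0| == t.
  move: hC; rewrite -card_draws card_gt0 => /set0Pn[T0]; rewrite inE => h; by exists T0.
have hS2 : S < \sum_(T : {set X} | #|T| == t) c1 * n%:R ^+ m.
  apply: ltr_sum; first by apply/hasP; exists T0; rewrite ?mem_index_enum.
  move=> T hT; have := none T; rewrite hT /= => /negbT; rewrite -ltNge; done.
rewrite sumr_const in hS2.
have ec : #|[pred T : {set X} | #|T| == t]| = 'C(n, t).
  by rewrite -card_draws; apply: eq_card => T; rewrite !inE.
rewrite ec -(mulr_natr (c1 * n%:R ^+ m)) in hS2.
have hb : 'C(n, t)%:R <= n%:R ^+ t / (t`!)%:R :> R := binom_ub n t.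
have eK : K = (c / 4) ^+ t * n%:R ^+ t / (t`!)%:R by rewrite /K /x exprMn.
set P := n%:R ^+ m in hG hS2 *.
set A := (c / 4) ^+ t in eK hS2 *.
have A0 : 0 <= A by rewrite exprn_ge0 // divr_ge0 ?ltW.
have P0 : 0 <= P by rewrite exprn_ge0 ?ler0n.
set B := n%:R ^+ t / (t`!)%:R in hb.
have eK' : K = A * B by rewrite eK /B mulrA.
rewrite eK' in hS K0.
have h1 : c / 2 * P * (A * B) <= #|Good|%:R * (A * B) by apply: ler_wpM2r.
have h2 : c1 * P * 'C(n, t)%:R <= c1 * P * B.
  apply: ler_wpM2l hb; rewrite mulr_ge0 // /c1 !mulr_ge0 ?divr_ge0 ?exprn_ge0 ?ltW ?divr_gt0 //.
have := lt_le_trans (le_lt_trans (le_trans h1 hS) hS2) h2.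
rewrite /c1; set cc := c / 2.
have -> : cc * A * P * B = cc * P * (A * B) by ring.
by rewrite ltxx.
Qed.


Lemma box m t (c : R) : 0 < c -> exists N : nat, forall X : finType, (N <= #|X|)%N ->
  forall E : {set m.-tuple X}, c * #|X|%:R ^+ m <= #|E|%:R ->
  exists W : nat -> {set X}, (forall i, (i < m)%N -> (t <= #|W i|)%N) /\
    (forall w : m.-tuple X, (forall i : 'I_m, tnth w i \in W i) -> w \in E).
Proof.
elim: m c => [|m IH] c c0.
  exists 0%N => X _ E hE.
  have : (0 < #|E|)%N.
    by rewrite -(ltr_nat R); apply: lt_le_trans hE; rewrite expr0 mulr1.
  rewrite card_gt0 => /set0Pn[w0 w0E].
  exists (fun _ => [set: X]); split => // w _.
  by rewrite (tuple0 w) -(tuple0 w0).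
pose c1 := c / 2 * (c / 4) ^+ t.
have c10 : 0 < c1 by rewrite /c1 mulr_gt0 ?exprn_gt0 ?divr_gt0.
have [N1 hN1] := IH c1 c10.
have q0 : 0 <= 4 * t%:R / c by rewrite divr_ge0 ?mulr_ge0 ?ler0n ?ltW.
pose N2 := Num.Def.archi_bound (4 * t%:R / c).
have hN2 := archi_boundP q0.
exists (maxn (maxn N1 N2) (maxn t 1)) => X; rewrite !geq_max => /andP[/andP[hX1 hX2] /andP[hXt hX0]].
move=> E hE.
have htc : 4 * t%:R <= c * #|X|%:R.
  have : 4 * t%:R / c < #|X|%:R by apply: lt_le_trans hN2 _; rewrite ler_nat.
  rewrite ltr_pdivrMr // => h; rewrite [c * _]mulrC; exact: ltW h.
have [T [hT hET]] := find_T c0 hX0 hXt htc hE.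
have [W' [hW'1 hW'2]] := hN1 X hX1 _ hET.
exists (fun i => if i is j.+1 then W' j else T); split.
  by case=> [|i] hi //=; [rewrite hT | apply: hW'1].
move=> w hw.
set w' := [tuple of behead w].
have hw' : w' \in [set w : m.-tuple X | T \subset [set x | consx x w \in E]].
  apply: hW'2 => i; rewrite tnth_behead.
  have := hw (inord i.+1); rewrite inordK //; exact: ltn_ord.
rewrite inE in hw'.
have h0 : thead w \in T by have := hw ord0.
have := fintype.subsetP hw' _ h0; rewrite inE.
by rewrite /consx -tuple_eta.
Qed.

End Box.


Section Embed.
Variables (V : finType) (H : {set {set V}}) (s : V -> nat).
Hypothesis spos : forall v, (0 < s v)%N.
Variables (m n : nat) (n0 : (0 < n)%N) (G : {set {set 'I_n}}).
Variables (f : {ffun V -> 'I_m}) (W : nat -> {set 'I_n}).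
Hypothesis finj : injective f.
Hypothesis hsW : forall v, (s v <= #|W (f v)|)%N.
Hypothesis hW0 : forall i : 'I_m, (0 < #|W i|)%N.
Hypothesis hbox : forall w : m.-tuple 'I_n, (forall i : 'I_m, tnth w i \in W i) ->
  injective (tnth w) /\ forall F, F \in H -> [set tnth w (f v) | v in F] \in G.

Let x0 : 'I_n := Ordinal n0.
Definition el (i : nat) (j : nat) : 'I_n := nth x0 (enum (W i)) j.

Lemma el_in i j : (j < #|W i|)%N -> el i j \in W i.
Proof. by move=> h; rewrite /el -mem_enum mem_nth // -cardE. Qed.

Lemma el_inj i j1 j2 : (j1 < #|W i|)%N -> (j2 < #|W i|)%N -> el i j1 = el i j2 -> j1 = j2.
Proof.
move=> h1 h2 /eqP; rewrite /el nth_uniq ?enum_uniq -?cardE //; by move/eqP.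
Qed.

Definition psiw (k : V -> nat) : m.-tuple 'I_n :=
  [tuple (match [pick v | f v == i] with Some v => el i (k v) | None => el i 0 end) | i < m].

Lemma psiw_f k v : tnth (psiw k) (f v) = el (f v) (k v).
Proof.
rewrite tnth_mktuple; case: pickP => [u /eqP /finj -> //|].
by move=> /(_ v); rewrite eqxx.
Qed.

Lemma psiw_in k : (forall v, k v < s v)%N -> forall i : 'I_m, tnth (psiw k) i \in W i.
Proof.
move=> hk i; rewrite tnth_mktuple; case: pickP => [u /eqP hu|_].
  by apply: el_in; rewrite -hu; apply: leq_trans (hk u) (hsW u).
exact: el_in.
Qed.

Definition phi : {ffun {v : V & 'I_(s v)} -> 'I_n} :=
  [ffun p : {v : V & 'I_(s v)} => el (f (tag p)) (nat_of_ord (tagged p))].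

Lemma embed_blowup : subgraph (blowup H s) G.
Proof.
apply/subgraphP; exists phi; split.
  move=> [v1 j1] [v2 j2]; rewrite !ffunE /= => he.
  have [e12|ne12] := eqVneq v1 v2.
    subst v2.
    have jj : val j1 = val j2.
      apply: (el_inj (i := f v1)) => //; apply: leq_trans (hsW v1); exact: ltn_ord.
    by have -> : j1 = j2 by apply: val_inj.
  pose k := fun u => if u == v1 then val j1 else if u == v2 then val j2 else 0%N.
  have hk : forall u, (k u < s u)%N.
    move=> u; rewrite /k; case: eqP => [->|_]; first exact: ltn_ord.
    by case: eqP => [->|_]; [exact: ltn_ord | exact: spos].
  have [winj _] := hbox (psiw_in hk).
  have : tnth (psiw k) (f v1) = tnth (psiw k) (f v2).
    rewrite !psiw_f /k eqxx eq_sym (negbTE ne12) eqxx; exact: he.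
  by move/winj/finj => e; rewrite e eqxx in ne12.
move=> S; rewrite inE => /existsP[F /andP[FH /existsP[g /eqP ->]]].
pose k := fun u => val (g u).
have hk : forall u, (k u < s u)%N by move=> u; exact: ltn_ord.
have [_ hE] := hbox (psiw_in hk).
have -> : phi @: [set Tagged (fun i => 'I_(s i)) (g i) | i in F] =
          [set tnth (psiw k) (f v) | v in F].
  rewrite -imset_comp; apply: eq_imset => v /=.
  by rewrite ffunE psiw_f.
exact: hE.
Qed.

End Embed.

Section Blowup.
Variable R : realType.
Variables (V : finType) (H : {set {set V}}) (s : V -> nat).
Hypothesis spos : forall v, (0 < s v)%N.

Definition g0 : {dffun forall i : V, 'I_(s i)} := [ffun i => Ordinal (spos i)].

Lemma card_tagset (g : {dffun forall i : V, 'I_(s i)}) (F : {set V}) :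
  #|[set Tagged (fun i => 'I_(s i)) (g i) | i in F]| = #|F|.
Proof. by rewrite card_imset // => i j /(congr1 tag). Qed.

Lemma mem_et_blowup k : (k \in edge_types (blowup H s)) = (k \in edge_types H).
Proof.
apply/idP/idP.
  apply: et_sub => S; rewrite inE => /existsP[F /andP[FH /existsP[g /eqP ->]]].
  by rewrite card_tagset; apply: et_memP.
rewrite mem_et => /existsP[F /andP[FH /eqP <-]].
rewrite -(card_tagset g0); apply: et_memP.
by rewrite inE; apply/existsP; exists F; rewrite FH; apply/existsP; exists g0.
Qed.

Lemma lim_of_blowup : lim_of R (blowup H s) = lim_of R H.
Proof.
rewrite /lim_of; congr (_%:R - 1); apply: perm_size; apply: uniq_perm; rewrite ?et_uniq //.
by move=> k; rewrite mem_et_blowup.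
Qed.

Lemma blowup_nonempty : (0 < #|H|)%N -> (0 < #|blowup H s|)%N.
Proof.
rewrite !card_gt0 => /set0Pn[F FH]; apply/set0Pn.
exists [set Tagged (fun i => 'I_(s i)) (g0 i) | i in F].
by rewrite inE; apply/existsP; exists F; rewrite FH; apply/existsP; exists g0.
Qed.

End Blowup.

Section Super.
Variable R : realType.

Lemma supersat (V : finType) (H : {set {set V}}) (s : V -> nat) :
  (forall v, 0 < s v)%N -> degenerate R H ->
  forall e : R, 0 < e -> exists N, forall n, (N <= n)%N -> forall G : {set {set 'I_n}},
  (forall k, k \in edge_types G -> k \in edge_types H) -> lim_of R H + e < hdens R G ->
  subgraph (blowup H s) G.
Proof.
move=> spos dH e e0.
have e40 : 0 < e / 4 by rewrite divr_gt0.
have [N0 hN0] := degen_upper dH e40.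
set m := maxn (maxn N0 #|V|) 1.
have hm : pi_n R H m <= lim_of R H + e / 4 by apply: hN0; rewrite /m !leq_max leqnn.
have Vm : (#|V| <= m)%N by rewrite /m !leq_max leqnn orbT.
have m0 : (0 < m)%N by rewrite /m leq_max orbT.
set r := size (edge_types H).
have r1 : (0 < r)%N.
  have := degen_nonempty dH; rewrite card_gt0 => /set0Pn[F FH].
  by rewrite /r; case: (edge_types H) (et_memP FH).
set t := (\sum_v s v).+1.
set KK := #|{ffun V -> 'I_m}|.
have KK0 : (0 < KK)%N by rewrite /KK card_ffun card_ord expn_gt0 m0.
set c := e / (2 * r%:R) / (2 ^+ m * KK%:R).
have c0 : 0 < c.
  by rewrite /c !divr_gt0 ?mulr_gt0 ?exprn_gt0 ?ltr0n.
have [Nb hNb] := box m t c0.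
exists (maxn Nb m.*2) => n; rewrite geq_max => /andP[nNb nm] G etG hG.
have n0 : (0 < n)%N by apply: leq_trans nm; rewrite -addnn; apply: leq_trans m0 (leq_addr _ _).
have Gle : forall A, A \in G -> (#|A| <= m)%N.
  by move=> A AG; apply: leq_trans (et_le (etG _ (et_memP AG))) Vm.
set nI := #|InjS 'I_m n|.
have hAvg := @avg_pull R m n G Gle.
have etp : forall psi, psi \in InjS 'I_m n -> forall k, k \in edge_types (pull psi G) -> k \in edge_types H.
  move=> psi; rewrite inE => /injectiveP pinj.
  apply: (@et_sub _ _ (fun k => k \in edge_types H)) => F; rewrite inE => hF.
  by rewrite -(card_imset F pinj); apply: etG; exact: et_memP.
have hdr : forall psi, psi \in InjS 'I_m n -> hdens R (pull psi G) <= r%:R.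
  move=> psi hpsi; apply: le_trans (hdens_le_et _ _) _; rewrite ler_nat.
  by apply: uniq_leq_size; [exact: et_uniq | exact: etp].
set l := lim_of R H.
have l0 : 0 <= l by apply: lim_of_ge; exact: degen_nonempty dH.
set Good := [set psi in InjS 'I_m n | l + e / 2 < hdens R (pull psi G)].
have hGood : nI%:R * (e / 2) <= #|Good|%:R * r%:R.
  have h1 : nI%:R * hdens R G <= #|Good|%:R * r%:R + nI%:R * (l + e / 2).
    rewrite -hAvg (bigID (fun psi => psi \in Good)) /=.
    apply: lerD.
      rewrite (eq_bigl (fun psi => psi \in Good)); last by move=> psi; rewrite !inE andbA andbb.
      apply: (@le_trans _ _ (\sum_(psi in Good) r%:R)).
        by apply: ler_sum => psi hpsi; apply: hdr; move: hpsi; rewrite !inE => /andP[].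
      by rewrite sumr_const -(mulr_natl (r%:R)).
    apply: (@le_trans _ _ (\sum_(psi in InjS 'I_m n | psi \notin Good) (l + e / 2))).
      apply: ler_sum => psi /andP[hI hnG]; move: hnG; rewrite inE hI /= -leNgt; done.
    rewrite sumr_const -(mulr_natl (l + e / 2)); apply: ler_wpM2r.
      by rewrite addr_ge0 // divr_ge0 ?ltW.
    rewrite ler_nat /nI; apply: subset_leq_card; apply/fintype.subsetP => psi; rewrite unfold_in /=.
    by case/andP.
  have h2 : nI%:R * (l + e) <= nI%:R * hdens R G by apply: ler_wpM2l; rewrite ?ler0n ?ltW.
  have nI0 : 0 <= nI%:R :> R by rewrite ler0n.
  nra.
have hf : forall psi, psi \in Good -> exists f : {ffun V -> 'I_m},
    injective f /\ forall F, F \in H -> psi @: (f @: F) \in G.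
  move=> psi; rewrite inE => /andP[psiI hpsi].
  have : subgraph H (pull psi G).
    case: (boolP (subgraph H (pull psi G))) => // nsub; exfalso.
    have := @pi_n_ge R V H m (pull psi G) _ nsub.
    have -> : all (fun k => k \in edge_types H) (edge_types (pull psi G)).
      by apply/allP; apply: etp.
    move=> /(_ isT) hle.
    have : hdens R (pull psi G) <= l + e / 4 by apply: le_trans hle hm.
    move: hpsi; clear -e0; lra.
  case/subgraphP => f [fi hf]; exists f; split => // F FH.
  by have := hf F FH; rewrite inE.
pose Gf (f : {ffun V -> 'I_m}) := [set psi in InjS 'I_m n |
   injectiveb f && [forall F in H, psi @: (f @: F) \in G]].
have hsumGf : (#|Good| <= \sum_(f : {ffun V -> 'I_m}) #|Gf f|)%N.
  rewrite -sum1_card.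
  apply: (@leq_trans (\sum_(psi in Good) \sum_(f : {ffun V -> 'I_m}) (psi \in Gf f : nat))).
    apply: leq_sum => psi hpsi; have [f [fi hfF]] := hf psi hpsi.
    rewrite (bigD1 f) //= ; apply: leq_trans (leq_addr _ _).
    rewrite inE; move: hpsi; rewrite inE => /andP[-> _] /=.
    rewrite (introT (injectiveP f) fi) /=.
    rewrite lt0b; by apply/forall_inP => F FH; apply: hfF.
  rewrite exchange_big /=; apply: leq_sum => f _.
  rewrite -sum1_card [X in (_ <= X)%N]big_mkcond /= [X in (X <= _)%N]big_mkcond /=.
  by apply: leq_sum => psi _; case: (psi \in Good); case: (psi \in Gf f).
pose f0 : {ffun V -> 'I_m} := [ffun _ => Ordinal m0].
pose fm := [arg max_(f > f0) #|Gf f|].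
have hfm : forall f, (#|Gf f| <= #|Gf fm|)%N.
  rewrite /fm; case: arg_maxnP => // g _ hg f; exact: hg.
have hKK : (#|Good| <= KK * #|Gf fm|)%N.
  apply: leq_trans hsumGf _.
  apply: (leq_trans (n := \sum_(f : {ffun V -> 'I_m}) #|Gf fm|)); first by apply: leq_sum => f _; exact: hfm.
  by rewrite sum_nat_const /KK.
have hI : (n%:R / 2) ^+ m <= nI%:R :> R.
  rewrite /nI /InjS card_inj_ffuns !card_ord.
  have mn : (m <= n)%N by apply: leq_trans nm; rewrite -addnn leq_addr.
  apply: (@le_trans _ _ (((n - m) ^ m)%N)%:R); last by rewrite ler_nat ffact_lb.
  rewrite natrX; apply: lerXn2r; rewrite ?nnegrE ?divr_ge0 ?ler0n //.
  rewrite natrB //.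
  have : (m.*2)%:R <= n%:R :> R by rewrite ler_nat.
  rewrite -muln2 natrM; lra.
pose tof := fun w : m.-tuple 'I_n => [ffun i => tnth w i].
pose toT := fun psi : {ffun 'I_m -> 'I_n} => [tuple psi i | i < m].
have tofK : cancel tof toT.
  by move=> w; apply: eq_from_tnth => i; rewrite tnth_mktuple ffunE.
have toTK : cancel toT tof.
  by move=> psi; apply/ffunP => i; rewrite ffunE tnth_mktuple.
pose E := tof @^-1: Gf fm.
have hE : #|E| = #|Gf fm|.
  by apply: on_card_preimset; exists toT => x _; [exact: tofK | exact: toTK].
have hcE : c * n%:R ^+ m <= #|E|%:R.
  rewrite hE.
  have h1 : nI%:R * (e / 2) <= (KK * #|Gf fm|)%:R * r%:R.
    apply: le_trans hGood _; apply: ler_wpM2r; first by rewrite ler0n.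
    by rewrite ler_nat.
  have h2 : n%:R ^+ m / 2 ^+ m * (e / 2) <= (KK * #|Gf fm|)%:R * r%:R.
    apply: le_trans h1; apply: ler_wpM2r; first by rewrite divr_ge0 ?ltW.
    by rewrite -expr_div_n.
  rewrite natrM in h2.
  have r0 : 0 < r%:R :> R by rewrite ltr0n.
  have K0 : 0 < KK%:R :> R by rewrite ltr0n.
  have p0 : 0 < 2 ^+ m :> R by rewrite exprn_gt0.
  rewrite /c.
  set P := n%:R ^+ m in h2 *; set Q := 2 ^+ m in h2 p0 *.
  set g := #|Gf fm|%:R in h2 *; set k := KK%:R in h2 K0 *; set rr := r%:R in h2 r0 *.
  rewrite -(ler_pM2r K0) -(ler_pM2r r0) -(ler_pM2r p0).
  have -> : e / (2 * rr) / (Q * k) * P * k * rr * Q = P / Q * (e / 2) * Q.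
    by field; rewrite ?gt_eqF.
  rewrite ler_pM2r //; apply: le_trans h2 _.
  by rewrite [k * g]mulrC.
have nX : (Nb <= #|'I_n|)%N by rewrite card_ord.
have hcE' : c * #|'I_n|%:R ^+ m <= #|E|%:R by rewrite card_ord.
have [W [hW1 hW2]] := hNb _ nX E hcE'.
have hst : forall v, (s v < t)%N.
  move=> v; rewrite ltnS /t (bigD1 v) //=; exact: leq_addr.
have Gne : (0 < #|Gf fm|)%N.
  rewrite -(ltr_nat R) -hE; apply: lt_le_trans hcE'.
  by rewrite card_ord mulr_gt0 ?exprn_gt0 ?ltr0n.
have fminj : injective fm.
  move: Gne; rewrite card_gt0 => /set0Pn[psi]; rewrite inE => /andP[_ /andP[/injectiveP h _]].
  exact: h.
apply: (@embed_blowup V H s spos m n n0 G fm W fminj).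
- by move=> v; apply: leq_trans (ltnW (hst v)) (hW1 _ (ltn_ord _)).
- by move=> i; apply: leq_trans (hW1 _ (ltn_ord i)).
- move=> w hw; have := hW2 w hw; rewrite !inE => /andP[/injectiveP winj /andP[_ /forall_inP hF]].
  split.
    by move=> i j hij; apply: winj; rewrite !ffunE.
  move=> F FH; have := hF F FH.
  suff -> : [set tnth w (fm v) | v in F] = tof w @: (fm @: F) by [].
  by rewrite -imset_comp; apply: eq_imset => v /=; rewrite ffunE.
Qed.

End Super.

Section Final.
Variable R : realType.

Lemma blowup_degen (V : finType) (H : {set {set V}}) (s : V -> nat) :
  (forall i, 0 < s i)%N -> degenerate R H -> degenerate R (blowup H s).
Proof.
move=> spos dH.
have H0 := degen_nonempty dH.
have K0 := blowup_nonempty spos H0.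
apply: degen_of => // e e0.
have [N hN] := @supersat R V H s spos dH e e0.
exists N => n hn.
apply: pi_n_le; first by rewrite addr_ge0 ?lim_of_ge ?ltW.
move=> G etG nsub.
rewrite leNgt; apply/negP => hlt; move/negP: nsub; apply.
apply: (hN n hn G).
  by move=> k /etG; rewrite mem_et_blowup.
by rewrite -(lim_of_blowup R H spos).
Qed.

End Final.

Theorem mainTheorem12 (R : realType) :
  (forall (V : finType) (H : {set {set V}}),
     degenerate R H ->
     (forall (W : finType) (H' : {set {set W}}),
        (0 < #|H'|)%N -> subgraph H' H -> degenerate R H') /\
     (forall s : V -> nat, (forall i, 0 < s i)%N -> degenerate R (blowup H s))) /\
  (forall (V : finType) (H : {set {set V}}) (s : V -> nat),
     is_flag H -> (forall i, 0 < s i)%N ->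
     forall (W : finType) (H' : {set {set W}}),
       (0 < #|H'|)%N -> subgraph H' (blowup H s) -> degenerate R H').
Proof.
split.
  move=> V H dH; split.
    by move=> W H' H'0 sub; exact: sub_degen dH H'0 sub.
  by move=> s hs; exact: blowup_degen.
move=> V H s fl hs W H' H'0 sub.
have H0 : (0 < #|H|)%N.
  move: H'0; rewrite card_gt0 => /set0Pn[F' F'H].
  move/subgraphP: sub => [f [_ hf]]; have := hf F' F'H.
  rewrite inE => /existsP[F /andP[FH _]]; rewrite card_gt0; apply/set0Pn; by exists F.
exact: sub_degen (blowup_degen hs (@flag_degen R _ _ fl H0)) H'0 sub.
Qed.
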